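(* Let $a,b,v$ be integers with $b>a\ge2$ and $v\ge2$, let $u=3$, and set $X:=ab-a-b$. Then $a,b,u,v$ satisfy (1) $a$, $b$ and $3v-1$ are pairwise coprime; (2) $\frac{1}{a}+\frac{1}{b}+\frac{v}{3v-1}>1$; (3) $vab-1=(3v-1)X$, if and only if the triple $(a,b,3v-1)$ is one of $(2,9,5)$, $(2,7,11)$. *)

(* Defs.v *)
From mathcomp Require Import all_boot all_order all_algebra.
Set Implicit Arguments. Unset Strict Implicit. Unset Printing Implicit Defensive.
Import Order.TTheory GRing.Theory Num.Theory.
Local Open Scope ring_scope.

Definition cond_abuv (a b u v : int) : Prop :=
  let c := u * v - 1 in
  let X := a * b - a - b in
  [/\ coprimez a b, coprimez a c, coprimez b c,
      (1 / a%:~R + 1 / b%:~R + v%:~R / c%:~R > (1 : rat))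
    & v * a * b - 1 = c * X].

(* Main.v *)
Require Import Defs.
From mathcomp Require Import all_boot all_order all_algebra.
From mathcomp Require Import zify.
Import Order.TTheory GRing.Theory Num.Theory.
Local Open Scope ring_scope.

Theorem lemma3p7 (a b v : int) :
  2 <= a -> a < b -> 2 <= v ->
  (cond_abuv a b 3 v <->
   ((a, b, 3 * v - 1) = (2, 9, 5) \/ (a, b, 3 * v - 1) = (2, 7, 11))).
Proof.
move=> ha hab hv; split.
- case=> _ _ _ _ E.
  have K : v * (2*a*b - 3*a - 3*b) = a*b - a - b - 1 by lia.
  have Dp : 0 < 2*a*b - 3*a - 3*b.
    case: (ltrP 0 (2*a*b - 3*a - 3*b)) => // hD.
    have : v * (2*a*b - 3*a - 3*b) <= 0 by nia.
    have : 0 < a * b - a - b - 1 \/ (a = 2 /\ b = 3) by nia.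
    nia.
  have B : (3*a-5)*(3*b-5) <= 22 by nia.
  have a2 : a = 2.
    case: (lerP a 2) => h2; first lia.
    have h1 : 4 <= 3*a-5 by lia.
    have h3 : 7 <= 3*b-5 by lia.
    have : 4 * 7 <= (3*a-5)*(3*b-5) by apply: ler_pM; lia.
    lia.
  subst a.
  have b9 : b <= 9 by nia.
  have hb : 6 < b by nia.
  have : b = 7 \/ b = 8 \/ b = 9 by lia.
  case=> [hb7|[hb7|hb7]]; subst b.
  + have -> : v = 4 by lia. by right.
  + exfalso; lia.
  + have -> : v = 2 by lia. by left.
- case=> [[-> -> hv']|[-> -> hv']].
  + have -> : v = 2 by lia.
    split; [exact: erefl|exact: erefl|exact: erefl|vm_compute; reflexivity|reflexivity].
  + have -> : v = 4 by lia.
    split; [exact: erefl|exact: erefl|exact: erefl|vm_compute; reflexivity|reflexivity].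
Qed.
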